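(* Let $q$ be a prime power, $n\ge 3$, and let $\Phi_1$ be the set of lines of $\mathrm{AG}(n,q)$. Let $V_0,V_1,V_2,V_3$ be the common eigenspaces of the association scheme on $\Phi_1$ described in the context. Then the characteristic vectors of the point-pencils of $\mathrm{AG}(n,q)$ form a basis of $V_0\perp V_1$.
   Context: $\mathrm{AG}(n,q)$ is $\mathrm{PG}(n,q)$ with a hyperplane $\pi_\infty$ removed; affine lines are projective lines not contained in $\pi_\infty$. Define relations on $\Phi_1$: $(\ell,\ell')\in R_0$ if $\ell=\ell'$; $\in R_1$ if they meet in an affine point; $\in R_2$ if they are distinct and meet in a point of $\pi_\infty$; $\in R_3$ if they are disjoint in $\mathrm{PG}(n,q)$. Let $B_1,B_2,B_3$ be the corresponding adjacency matrices (real $|\Phi_1|\times|\Phi_1|$). These commute and $\mathbb{R}^{\Phi_1}$ is the orthogonal direct sum of four common eigenspaces $V_0,V_1,V_2,V_3$, on which $(B_1,B_2,B_3)$ act as the scalars: on $V_0$ (spanned by the all-ones vector) $\left(\frac{q^{n+1}-q^2}{q-1},\,q^{n-1}-1,\,\frac{q^2-(q+1)q^n+q^{2n-1}}{q-1}\right)$; on $V_1$ $\left(\frac{q^n-q^2}{q-1},\,-1,\,\frac{q^2-q^n}{q-1}\right)$; on $V_2$ $(-q,-1,q)$; on $V_3$ $(-q,\,q^{n-1}-1,\,q-q^{n-1})$. A point-pencil is the set of all affine lines through a fixed affine point. *)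

(* Defs.v *)
From HB Require Import structures.
From mathcomp Require Import all_boot all_order all_algebra all_field.
Set Implicit Arguments. Unset Strict Implicit. Unset Printing Implicit Defensive.
Import Order.TTheory GRing.Theory Num.Theory.
Local Open Scope ring_scope.

(* AG(n,q): points are row vectors 'rV[F]_n over a finite field F with q = #|F|. *)
Section AG.
Variables (F : finFieldType) (n : nat).

Definition point := 'rV[F]_n.

Definition is_line (L : {set point}) : bool :=
  [exists a : point, exists d : point,
     (d != 0) && (L == [set a + t *: d | t : F])].

Definition line := {L : {set point} | is_line L}.
HB.instance Definition _ := Finite.on line.

(* two affine lines are parallel (same point at infinity) iff one is a translate
   of the other *)
Definition parallel (l l' : line) : bool :=
  [exists u : point, val l' == [set x + u | x in val l]].

Definition rel1 (l l' : line) : bool :=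
  (l != l') && (val l :&: val l' != set0).
Definition rel2 (l l' : line) : bool :=
  (l != l') && parallel l l'.
(* R_3 : disjoint in PG(n,q): no common affine point, not parallel *)
Definition rel3 (l l' : line) : bool :=
  (val l :&: val l' == set0) && ~~ parallel l l'.

Variable R : realFieldType.

Definition vec := {ffun line -> R^o}.

Definition adj (rel : line -> line -> bool) (v : vec) : vec :=
  [ffun l => \sum_(l' | rel l l') v l'].

Definition B1 := adj rel1.
Definition B2 := adj rel2.
Definition B3 := adj rel3.

Definition qR : R := (#|F|)%:R.

(* eigenvalue triples (on B1, B2, B3) for V_0, V_1, V_2, V_3 *)
Definition eigvals (i : 'I_4) : R * R * R :=
  let q := qR in
  match val i with
  | 0%N => ((q ^+ n.+1 - q ^+ 2) / (q - 1), q ^+ n.-1 - 1,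
            (q ^+ 2 - (q + 1) * q ^+ n + q ^+ (2 * n).-1) / (q - 1))
  | 1%N => ((q ^+ n - q ^+ 2) / (q - 1), -1, (q ^+ 2 - q ^+ n) / (q - 1))
  | 2%N => (- q, -1, q)
  | _ => (- q, q ^+ n.-1 - 1, q - q ^+ n.-1)
  end.

Definition inV (i : 'I_4) (v : vec) : Prop :=
  let: (a, b, c) := eigvals i in
  [/\ B1 v = a *: v, B2 v = b *: v & B3 v = c *: v].

Definition pencil (p : point) : vec := [ffun l : line => (p \in val l)%:R].

Definition pencils : seq vec := [seq pencil p | p : point].

End AG.

(* Main.v *)
Require Import Defs.
From HB Require Import structures.
From mathcomp Require Import all_boot all_order all_algebra all_field.
From mathcomp Require Import ring lra zify.
Set Implicit Arguments. Unset Strict Implicit. Unset Printing Implicit Defensive.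
Import Order.TTheory GRing.Theory Num.Theory.
Local Open Scope ring_scope.

Section Geo.
Variables (F : finFieldType) (n : nat).
Local Notation point := (point F n).
Local Notation line := (line F n).

Definition lset (a d : point) : {set point} := [set a + t *: d | t : F].

Lemma line_eq (a d a' d' : point) (s c : F) : c != 0 -> a' = a + s *: d ->
  d' = c *: d -> lset a d = lset a' d'.
Proof.
move=> c0 -> ->; apply/setP => x; apply/imsetP/imsetP => [[t _ ->]|[t _ ->]].
  exists ((t - s) / c) => //; rewrite scalerA mulfVK // -addrA -scalerDl.
  by congr (_ + _ *: _); rewrite addrC subrK.
exists (s + t * c) => //; by rewrite scalerA -addrA -scalerDl.
Qed.

Lemma mem_lset a d x : x \in lset a d -> lset a d = lset x d.
Proof.
case/imsetP => s _ ->; apply: (line_eq (s:=s) (c:=1)) => //; first exact: oner_neq0.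
by rewrite scale1r.
Qed.

Lemma lset_through a d x y : x \in lset a d -> y \in lset a d -> x != y ->
  lset a d = lset x (y - x).
Proof.
case/imsetP => s _ ->; case/imsetP => s' _ -> nxy.
apply: (line_eq (s:=s) (c:=s' - s)).
- by apply: contraNneq nxy => /eqP; rewrite subr_eq0 => /eqP ->.
- by [].
- by rewrite scalerBl opprD addrACA subrr add0r.
Qed.

Lemma lineP (l : line) : exists a d, d != 0 /\ val l = lset a d.
Proof.
by have /existsP [a /existsP [d /andP [dn0 /eqP E]]] := valP l; exists a, d.
Qed.

Lemma lset_is_line a d : d != 0 -> is_line (lset a d).
Proof. by move=> dn0; apply/existsP; exists a; apply/existsP; exists d; rewrite dn0 eqxx. Qed.

Lemma mem_lset0 a d : a \in lset a d.
Proof. by apply/imsetP; exists 0 => //; rewrite scale0r addr0. Qed.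

Lemma mem_lset1 a d : a + d \in lset a d.
Proof. by apply/imsetP; exists 1 => //; rewrite scale1r. Qed.

Lemma line_through (l : line) x y : x != y -> x \in val l -> y \in val l ->
  val l = lset x (y - x).
Proof.
move=> nxy; have [a [d [_ ->]]] := lineP l; move=> hx hy; exact: lset_through.
Qed.

Lemma line_uniq (l l' : line) x y : x != y -> x \in val l -> y \in val l ->
  x \in val l' -> y \in val l' -> l = l'.
Proof.
move=> nxy h1 h2 h3 h4; apply: val_inj.
by rewrite (line_through nxy h1 h2) (line_through nxy h3 h4).
Qed.

Lemma card_lines2 x y : x != y ->
  #|[set l : line | (x \in val l) && (y \in val l)]| = 1%N.
Proof.
move=> nxy.
have dn0 : y - x != 0 by rewrite subr_eq0 eq_sym.
pose l0 : line := Sub (lset x (y - x)) (lset_is_line x dn0).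
have h1 : x \in val l0 by exact: mem_lset0.
have h2 : y \in val l0 by rewrite /= {1}(_ : y = x + (y - x)) ?mem_lset1 // addrC subrK.
rewrite (_ : [set l : line | _] = [set l0]) ?cards1 //.
apply/setP => l; rewrite !inE; apply/andP/eqP => [[h3 h4]|->] //.
exact: (line_uniq nxy).
Qed.

Lemma card_line (l : line) : #|val l| = #|F|.
Proof.
have [a [d [dn0 ->]]] := lineP l; rewrite /lset card_imset //.
move=> s t /eqP; rewrite (inj_eq (addrI a)) -subr_eq0 -scalerBl scaler_eq0.
by rewrite (negbTE dn0) orbF subr_eq0 => /eqP.
Qed.

Lemma meet_le1 (l l' : line) : l != l' -> (#|val l :&: val l'| <= 1)%N.
Proof.
move=> nll; rewrite leqNgt; apply/negP => /card_gt1P [x [y [hx hy nxy]]].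
move: hx hy; rewrite !inE => /andP [h1 h2] /andP [h3 h4].
by move/eqP: nll; apply; apply: (line_uniq nxy).
Qed.


Lemma par_dir (l l' : line) a d p : val l = lset a d -> parallel l l' ->
  p \in val l' -> val l' = lset p d.
Proof.
move=> El /existsP [u /eqP E].
have -> : val l' = lset (a + u) d.
  rewrite E El; apply/setP => x; apply/imsetP/imsetP.
    by case=> y /imsetP [t _ ->] ->; exists t => //; rewrite addrAC.
  case=> t _ ->; exists (a + t *: d); first by apply/imsetP; exists t.
  by rewrite addrAC.
exact: mem_lset.
Qed.

Lemma par_disj (l l' : line) : parallel l l' -> l != l' -> val l :&: val l' = set0.
Proof.
move=> hp nll; apply/setP => p; rewrite !inE; apply/negP => /andP [h1 h2].
have [a [d [_ El]]] := lineP l.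
move/eqP: nll; apply; apply: val_inj.
have h1' : p \in lset a d by rewrite -El.
by rewrite (par_dir El hp h2) El (mem_lset h1').
Qed.


Lemma card_par (l : line) p :
  #|[set l' | rel2 l l' && (p \in val l')]| = (p \notin val l) :> nat.
Proof.
have [a [d [dn0 El]]] := lineP l.
case: (boolP (p \in val l)) => hp /=.
  apply/eqP; rewrite cards_eq0; apply/eqP/setP => l'; rewrite !inE /rel2.
  apply/negP => /andP [/andP [nll hpar] hp'].
  by have /setP /(_ p) := par_disj hpar nll; rewrite !inE hp hp'.
pose lp : line := Sub (lset p d) (lset_is_line p dn0).
rewrite (_ : [set _ | _] = [set lp]) ?cards1 //.
apply/setP => l'; rewrite !inE /rel2; apply/idP/eqP.
  by case/andP => /andP [_ hpar] hp'; apply: val_inj; exact: par_dir El hpar hp'.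
move->; rewrite [p \in _]mem_lset0 andbT; apply/andP; split.
  by apply/eqP => E; move: hp; rewrite E /= mem_lset0.
apply/existsP; exists (p - a); apply/eqP; rewrite El /=; apply/setP => x.
apply/imsetP/imsetP.
  case=> t _ ->; exists (a + t *: d); first by apply/imsetP; exists t.
  by rewrite [RHS]addrC addrA subrK.
case=> y /imsetP [t _ ->] ->; exists t => //.
by rewrite [LHS]addrC addrA subrK.
Qed.


Lemma card_F_gt1 : (1 < #|F|)%N.
Proof. by apply/card_gt1P; exists 0, 1; rewrite !inE eq_sym oner_neq0. Qed.

Lemma card_point : #|point| = (#|F| ^ n)%N.
Proof. by rewrite card_mx mul1n. Qed.

Lemma dcount2 (I J : finType) (P : pred I) (Q : pred J) (f : I -> J -> bool) :
  (\sum_(i | P i) #|[set j | Q j && f i j]| = \sum_(j | Q j) #|[set i | P i && f i j]|)%N.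
Proof.
have E1 i : #|[set j | Q j && f i j]| = (\sum_(j | Q j) (f i j : nat))%N.
  rewrite -sum1_card big_mkcond [RHS]big_mkcond; apply eq_bigr => j _.
  by rewrite inE; case: (Q j); case: (f i j).
have E2 j : #|[set i | P i && f i j]| = (\sum_(i | P i) (f i j : nat))%N.
  rewrite -sum1_card big_mkcond [RHS]big_mkcond; apply eq_bigr => i _.
  by rewrite inE; case: (P i); case: (f i j).
rewrite (eq_bigr _ (fun i _ => E1 i)) (eq_bigr _ (fun j _ => E2 j)).
exact: exchange_big.
Qed.

Lemma sum_const_cond (I : finType) (P : pred I) (c : nat) :
  (\sum_(i | P i) c = #|[set i | P i]| * c)%N.
Proof.
rewrite -sum_nat_const; apply: eq_bigl => i; by rewrite inE.
Qed.

Definition rc (p : point) := #|[set l : line | p \in val l]|.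

Lemma r_count p : (rc p * (#|F| - 1) = #|point| - 1)%N.
Proof.
have := dcount2 (fun l : line => p \in val l) (fun x => x != p) (fun l x => x \in val l).
rewrite (eq_bigr (fun _ => #|F| - 1)%N); last first.
  move=> l hp; have := cardsD1 p (val l); rewrite hp card_line add1n => ->.
  rewrite subSS subn0; apply: eq_card => x; by rewrite !inE.
rewrite [X in _ = X -> _](eq_bigr (fun _ => 1%N)); last first.
  by move=> x hx /=; rewrite card_lines2 // eq_sym.
rewrite !sum_const_cond muln1 => ->.
rewrite subn1 -(cardC1 p); apply: eq_card => x; by rewrite !inE.
Qed.

Lemma rc_const p : rc p = rc (0%R : point).
Proof.
have h1 := r_count p; have h2 := r_count (0%R:point).
have hq : (0 < #|F| - 1)%N by rewrite subn_gt0 card_F_gt1.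
by apply/eqP; rewrite -(eqn_pmul2r hq) h1 h2.
Qed.

Lemma meet_count (l : line) p : p \notin val l ->
  #|[set l' | rel1 l l' && (p \in val l')]| = #|F|.
Proof.
move=> hp.
have := dcount2 (fun l' : line => p \in val l') (fun x => x \in val l) (fun l' x => x \in val l').
rewrite (eq_bigr (fun l' => (rel1 l l' : nat))); last first.
  move=> l' hp' /=; have nll : l != l' by apply: contraNneq hp => ->.
  rewrite (_ : [set x | _] = val l :&: val l'); last by apply/setP => x; rewrite !inE.
  rewrite /rel1 nll /=.
  have := meet_le1 nll; case: (boolP (_ == set0)) => [/eqP -> | ]; first by rewrite cards0.
  rewrite -card_gt0; case: #|_| => [|[|]] //.
rewrite [X in _ = X -> _](eq_bigr (fun _ => 1%N)); last first.
  by move=> x hx /=; rewrite card_lines2 //; apply: contraNneq hp => ->.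
rewrite sum_const_cond muln1 (eq_card (B := val l)); last by move=> x; rewrite inE.
rewrite card_line => <-.
rewrite -sum1_card big_mkcond [RHS]big_mkcond; apply eq_bigr => l' _.
by rewrite inE; case: (p \in val l'); case: rel1; rewrite ?andbF ?andbT.
Qed.

Lemma through_count (l : line) p : p \in val l ->
  #|[set l' | rel1 l l' && (p \in val l')]| = (rc p).-1.
Proof.
move=> hp; rewrite /rc [in RHS](cardsD1 l) inE hp (_ : forall k, (true + k).-1 = k) //.
apply: eq_card => l'; rewrite !inE /rel1.
case: (boolP (p \in val l')) => hp'; rewrite ?andbF ?andbT //.
rewrite eq_sym; case: (l' != l) => //=; apply/set0Pn; exists p; by rewrite inE hp hp'.
Qed.

Lemma lines_count : (#|{: line}| * #|F| = #|point| * rc (0%R : point))%N.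
Proof.
have := dcount2 (fun l : line => true) (fun x : point => true) (fun l x => x \in val l).
rewrite (eq_bigr (fun _ => #|F|)); last first.
  by move=> l _; rewrite -(card_line l); apply: eq_card => x; rewrite inE.
rewrite [X in _ = X -> _](eq_bigr (fun _ => rc (0%R : point))); last first.
  by move=> x _; rewrite -(rc_const x); apply: eq_card => l; rewrite inE.
have E (T : finType) : #|[set x : T | true]| = #|T| by apply: eq_card => x; rewrite inE.
by rewrite !sum_const_cond !E.
Qed.

Lemma rel_partition (l l' : line) :
  ((l == l') + rel1 l l' + rel2 l l' + rel3 l l' = 1)%N.
Proof.
rewrite /rel1 /rel2 /rel3; case: (eqVneq l l') => [<-|nll] /=.
  rewrite setIid; suff -> : (val l == set0) = false by [].
  apply/negbTE; rewrite -card_gt0 card_line; exact: ltn_trans card_F_gt1.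
case: (boolP (parallel l l')) => hp.
  by rewrite (par_disj hp nll) eqxx.
by case: (_ == set0).
Qed.

End Geo.

Section Alg.
Variables (F : finFieldType) (n : nat) (R : realFieldType).
Local Notation point := (point F n).
Local Notation line := (line F n).
Local Notation vec := (vec F n R).
Local Notation q := (qR F R).
Local Notation rr := ((rc (0%R : point))%:R : R).
Local Notation Ns := ((#|{: line}|)%:R : R).

Definition onev : vec := [ffun _ => 1].

Lemma sum_bool (I : finType) (P Q : pred I) :
  \sum_(i | P i) ((Q i)%:R : R) = (#|[set i | P i && Q i]|)%:R.
Proof.
rewrite -natr_sum; congr (_%:R); rewrite -sum1_card big_mkcond [RHS]big_mkcond.
by apply: eq_bigr => i _; rewrite inE; case: (P i); case: (Q i).
Qed.

Lemma adjv_lin rel (a : R) (u w : vec) : adj rel (a *: u + w) = a *: adj rel u + adj rel w.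
Proof.
apply/ffunP => l; rewrite !ffunE; under eq_bigr do rewrite !ffunE.
by rewrite big_split /= scaler_sumr.
Qed.

Lemma adjv0 rel : adj rel (0 : vec) = 0.
Proof. by apply/ffunP => l; rewrite !ffunE big1 // => l' _; rewrite ffunE. Qed.

Lemma adjvD rel (u w : vec) : adj rel (u + w) = adj rel u + adj rel w.
Proof. by have := adjv_lin rel 1 u w; rewrite !scale1r. Qed.

Lemma adjvZ rel (a : R) (u : vec) : adj rel (a *: u) = a *: adj rel u.
Proof. by have := adjv_lin rel a u 0; rewrite !addr0 adjv0 addr0. Qed.

Lemma adjv_sum rel (I : finType) (f : I -> vec) :
  adj rel (\sum_i f i) = \sum_i adj rel (f i).
Proof. exact: (big_morph _ (adjvD rel) (adjv0 rel)). Qed.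

Lemma q_gt1 : 1 < q.
Proof. by rewrite /qR ltr1n (card_F_gt1 F). Qed.

Lemma hr : rr * (q - 1) = q ^+ n - 1.
Proof.
have := r_count (0%R : point); rewrite card_point => /(congr1 (fun k => k%:R : R)).
have h1 : (0 < #|F|)%N by apply: ltnW; exact: card_F_gt1.
rewrite natrM !natrB ?expn_gt0 ?h1 //.
by rewrite natrX.
Qed.

Lemma hL : Ns * q = q ^+ n * rr.
Proof.
have := lines_count F n; rewrite card_point => /(congr1 (fun k => k%:R : R)).
by rewrite !natrM natrX.
Qed.

Lemma pencilE (p : point) (l : line) : pencil R p l = (p \in val l)%:R.
Proof. by rewrite ffunE. Qed.

Lemma B1_pencil (p : point) : B1 (pencil R p) = (rr - 1 - q) *: pencil R p + q *: onev.
Proof.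
apply/ffunP => l; rewrite !ffunE; under eq_bigr do rewrite ffunE.
rewrite sum_bool; case: (boolP (p \in val l)) => hp.
  rewrite through_count // rc_const.
  have : (0 < rc (0%R : point))%N by rewrite -(rc_const p) card_gt0; apply/set0Pn; exists l; rewrite inE.
  move/prednK => E; rewrite -[in rr]E mulrS; rewrite /GRing.scale /=; lra.
rewrite meet_count //; rewrite /GRing.scale /= /qR; lra.
Qed.

Lemma B2_pencil (p : point) : B2 (pencil R p) = onev - pencil R p.
Proof.
apply/ffunP => l; rewrite !ffunE; under eq_bigr do rewrite ffunE.
rewrite sum_bool card_par; case: (p \in val l) => /=; [by rewrite subrr | by rewrite subr0].
Qed.

Lemma sum_pencils : \sum_p pencil R p = q *: onev.
Proof.
apply/ffunP => l; rewrite sum_ffunE !ffunE; under eq_bigr do rewrite ffunE.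
rewrite sum_bool /GRing.scale /= mulr1 /qR -(card_line l); congr (_%:R).
by apply: eq_card => x; rewrite inE.
Qed.

Lemma sum_pencil_l (p : point) : \sum_l pencil R p l = rr.
Proof.
under eq_bigr do rewrite ffunE.
rewrite sum_bool -(rc_const p); congr (_%:R); by apply: eq_card => x; rewrite !inE.
Qed.

Lemma sum_one : \sum_l onev l = Ns.
Proof.
under eq_bigr do rewrite ffunE.
by rewrite sumr_const.
Qed.

Lemma B3E (x : vec) : B3 x = (\sum_l x l) *: onev - x - B1 x - B2 x.
Proof.
apply/ffunP => l; rewrite !ffunE.
have E : \sum_l' x l' = \sum_l' ((l == l')%:R * x l') + \sum_l' ((rel1 l l')%:R * x l')
   + \sum_l' ((rel2 l l')%:R * x l') + \sum_l' ((rel3 l l')%:R * x l').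
  rewrite -!big_split; apply: eq_bigr => l' _ /=.
  by rewrite -!mulrDl -!natrD rel_partition mul1r.
have S (b : line -> bool) : \sum_l' ((b l')%:R * x l') = \sum_(l' | b l') x l'.
  by rewrite [RHS]big_mkcond; apply: eq_bigr => l' _; case: (b l'); rewrite ?mul1r ?mul0r.
rewrite E !S.
rewrite [\sum_(l' | l == l') x l'](big_pred1 l); last by move=> l'; rewrite /= eq_sym.
rewrite /GRing.scale /= mulr1; lra.
Qed.

End Alg.

Section Main.
Variables (F : finFieldType) (n : nat) (R : realFieldType).
Hypothesis hn : (2 < n)%N.
Local Notation point := (point F n).
Local Notation line := (line F n).
Local Notation vec := (vec F n R).
Local Notation q := (qR F R).
Local Notation rr := ((rc (0%R : point))%:R : R).
Local Notation Ns := ((#|{: line}|)%:R : R).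
Local Notation Q := (q ^+ n.-1).
Local Notation onev := (onev F n R).

Lemma q0 : q != 0.
Proof. by have := q_gt1 F R; rewrite lt_neqAle => /andP [_ h]; rewrite gt_eqF // (lt_le_trans ltr01). Qed.

Lemma q10 : q - 1 != 0.
Proof. by have := q_gt1 F R; rewrite subr_eq0 lt_def eq_sym => /andP [h _]. Qed.

Lemma qn : q ^+ n = q * Q.
Proof. by rewrite -exprS prednK // ltnW // ltnW. Qed.

Lemma Qgeq : q <= Q.
Proof.
have h1 := q_gt1 F R.
have -> : n.-1 = (n.-2).+1 by case: n hn => [|[|]].
rewrite exprS; have : 1 <= q ^+ n.-2 by apply: exprn_ege1; lra.
move=> h; nra.
Qed.

Lemma Q0 : Q != 0.
Proof. have := Qgeq; have := q_gt1 F R => h1 h2; rewrite gt_eqF //; lra. Qed.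

Lemma rrE : rr = (q * Q - 1) / (q - 1).
Proof. by rewrite -qn -(hr F n R) mulfK // q10. Qed.

Lemma NsE : Ns = Q * rr.
Proof.
apply: (mulIf q0); rewrite (hL F n R) qn; ring.
Qed.

Lemma B1_one : B1 onev = (rr - 1 - q + q ^+ n) *: onev.
Proof.
apply: (scalerI q0); rewrite /B1 -adjvZ -sum_pencils adjv_sum.
under eq_bigr do rewrite -/(B1 _) B1_pencil.
rewrite big_split /= -scaler_sumr sum_pencils sumr_const card_point.
apply/ffunP => l; rewrite !ffunE ffunMnE !ffunE /GRing.scale /= -[X in _ + X]mulr_natr natrX.
rewrite /qR; ring.
Qed.


Lemma B2_one : B2 onev = (Q - 1) *: onev.
Proof.
apply: (scalerI q0); rewrite /B2 -adjvZ -sum_pencils adjv_sum.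
under eq_bigr do rewrite -/(B2 _) B2_pencil.
rewrite sumrB sum_pencils sumr_const card_point.
apply/ffunP => l; rewrite !ffunE ffunMnE !ffunE /GRing.scale /= -[X in X - _]mulr_natr natrX.
rewrite -/q qn; ring.
Qed.

Lemma B3_one : B3 onev = (Ns - 1 - (rr - 1 - q + q ^+ n) - (Q - 1)) *: onev.
Proof.
rewrite B3E sum_one B1_one B2_one; apply/ffunP => l; rewrite !ffunE /GRing.scale /=; ring.
Qed.

Lemma inV_lin i (a : R) (u w : vec) : inV i u -> inV i w -> inV i (a *: u + w).
Proof.
rewrite /inV; case: (eigvals F n R i) => [[x y] z] [h1 h2 h3] [k1 k2 k3].
rewrite /B1 /B2 /B3 in h1 h2 h3 k1 k2 k3 *.
by split; rewrite adjv_lin ?h1 ?k1 ?h2 ?k2 ?h3 ?k3 scalerA mulrC -scalerA -scalerDr.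
Qed.

Lemma inV_0 i : inV i (0 : vec).
Proof.
rewrite /inV; case: (eigvals F n R i) => [[x y] z].
by split; rewrite /B1 /B2 /B3 adjv0 scaler0.
Qed.

Lemma expr2n1 : q ^+ (2 * n).-1 = q * Q * Q.
Proof.
have -> : (2 * n).-1 = (n.-1 + n.-1).+1 by case: n hn => // k _; rewrite /= mulnS /=; lia.
by rewrite exprS exprD mulrA.
Qed.

Lemma one_V0 : inV ord0 onev.
Proof.
rewrite /inV /eigvals /=; split.
- rewrite B1_one; congr (_ *: _); rewrite rrE !exprS qn expr0; field; exact: q10.
- exact: B2_one.
- rewrite B3_one; congr (_ *: _); rewrite NsE rrE expr2n1 qn expr2; field; exact: q10.
Qed.

Lemma eig1 : eigvals F n R (inord 1) = ((q ^+ n - q ^+ 2) / (q - 1), -1, (q ^+ 2 - q ^+ n) / (q - 1)).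
Proof. by have -> : (inord 1 : 'I_4) = Ordinal (isT : (1 < 4)%N) by apply/val_inj; rewrite /= inordK. Qed.

Lemma v1_V1 (p : point) : inV (inord 1) (pencil R p - Q^-1 *: onev).
Proof.
have -> : pencil R p - Q^-1 *: onev = (- Q^-1) *: onev + pencil R p by rewrite addrC scaleNr.
rewrite /inV eig1; split.
- rewrite /B1 adjv_lin -/(B1 _) -/(B1 _) B1_one B1_pencil.
  apply/ffunP => l; rewrite !ffunE /GRing.scale /= rrE qn expr2; field.
  by rewrite q10 Q0.
- rewrite /B2 adjv_lin -/(B2 _) -/(B2 _) B2_one B2_pencil.
  apply/ffunP => l; rewrite !ffunE /GRing.scale /=; field; exact: Q0.
- have Sv : \sum_l ((- Q^-1) *: onev + pencil R p) l = - Q^-1 * Ns + rr.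
    under eq_bigr do rewrite ffunE [X in X + _]ffunE.
    by rewrite big_split /= -scaler_sumr sum_one sum_pencil_l.
  rewrite B3E Sv /B1 /B2 !adjv_lin -!/(B1 _) -!/(B2 _) B1_one B1_pencil B2_one B2_pencil.
  apply/ffunP => l; rewrite !ffunE /GRing.scale /= NsE rrE qn expr2; field.
  by rewrite q10 Q0.
Qed.


Lemma card_meet (l l' : line) : #|val l :&: val l'| = ((l == l') * #|F| + rel1 l l')%N.
Proof.
case: (eqVneq l l') => [<-|nll]; first by rewrite setIid card_line /rel1 eqxx /= mul1n addn0.
rewrite /rel1 nll /= mul0n add0n.
have := meet_le1 nll; case: (boolP (_ == set0)) => [/eqP -> | ]; first by rewrite cards0.
rewrite -card_gt0; case: #|_| => [|[|]] //.
Qed.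

Lemma MMt (w : vec) : \sum_p (\sum_l' pencil R p l' * w l') *: pencil R p = q *: w + B1 w.
Proof.
apply/ffunP => l; rewrite sum_ffunE !ffunE.
transitivity (\sum_(p : point) \sum_(l' : line) ((p \in val l')%:R * w l' * (p \in val l)%:R)).
  apply: eq_bigr => p _; rewrite !ffunE /GRing.scale /= mulr_suml.
  by apply: eq_bigr => l' _; rewrite ffunE.
rewrite exchange_big /=.
transitivity (\sum_(l' : line) (w l' * (#|val l :&: val l'|)%:R)).
  apply: eq_bigr => l' _.
  rewrite (_ : val l :&: val l' = [set p | (p \in val l) && (p \in val l')]); last first.
    by apply/setP => x; rewrite !inE.
  rewrite -sum_bool mulr_sumr [RHS]big_mkcond; apply: eq_bigr => p _.
  by case: (p \in val l); case: (p \in val l'); rewrite /= ?mulr1 ?mulr0 ?mul1r ?mul0r.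
rewrite (eq_bigr (fun l' => w l' * ((l == l')%:R * q) + w l' * (rel1 l l')%:R)); last first.
  by move=> l' _; rewrite card_meet natrD natrM mulrDr.
rewrite big_split /= /GRing.scale /=; congr (_ + _).
  rewrite (bigD1 l) //= eqxx mul1r big1 ?addr0 /qR; first by rewrite mulrC.
  by move=> l' nl; rewrite eq_sym (negbTE nl) mul0r mulr0.
rewrite [RHS]big_mkcond; apply: eq_bigr => l' _.
by case: (rel1 l l'); rewrite ?mulr1 ?mulr0.
Qed.

Lemma eig_span (w : vec) (a : R) : B1 w = a *: w -> a + q != 0 -> w \in <<pencils F n R>>%VS.
Proof.
move=> h ha.
have -> : w = (a + q)^-1 *: \sum_p (\sum_l' pencil R p l' * w l') *: pencil R p.
  by rewrite MMt h -scalerDl scalerA [q + a]addrC mulVf // scale1r.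
apply: memvZ; apply: memv_suml => p _; apply: memvZ; apply: memv_span.
exact: image_f.
Qed.


Lemma rr1_gt0 : 0 < rr - 1.
Proof.
have -> : rr - 1 = q * (Q - 1) / (q - 1).
  rewrite rrE; field; exact: q10.
have h1 := q_gt1 F R; have h2 := Qgeq.
apply: divr_gt0; last by lra.
apply: mulr_gt0; lra.
Qed.

Lemma pencils_free : free (pencils F n R).
Proof.
apply/freeP => k Hk i.
pose h (x : point) : 'I_#|point| := enum_rank x.
pose g (j : 'I_#|point|) : point := enum_val j.
have hg : cancel h g by move=> x; rewrite /g /h enum_rankK.
have gh : cancel g h by move=> j; rewrite /g /h enum_valK.
pose kk x := k (h x).
have Hk' : \sum_x kk x *: pencil R x = 0.
  rewrite -[X in _ = X]Hk (reindex h) /=; last by apply: onW_bij; exists g.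
  apply: eq_bigr => x _; congr (_ *: _); rewrite /h; have := nth_image 0 (pencil R) (enum_rank x).
  by rewrite enum_rankK => E; symmetry; exact: E.
pose K := \sum_x kk x.
have key y : kk y * (rr - 1) + K = 0.
  have := congr1 (fun v : vec => \sum_(l : line | y \in val l) v l) Hk'.
  rewrite /= [X in _ = X]big1; last by move=> l _; rewrite ffunE.
  under eq_bigr do rewrite sum_ffunE.
  rewrite exchange_big /=.
  under eq_bigr do (under eq_bigr do rewrite !ffunE /GRing.scale /=; rewrite -mulr_sumr sum_bool).
  rewrite (bigD1 y) //= (_ : [set l | _] = [set l : line | y \in val l]); last first.
    by apply/setP => l; rewrite !inE andbb.
  rewrite (eq_bigr (fun x => kk x)); last first.
    by move=> x nx; rewrite card_lines2 ?mulr1 // eq_sym.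
  move=> E; rewrite /K (bigD1 y) //= -[X in _ = X]E (_ : #|[set l : line | y \in val l]| = rc (0%R:point)); first ring.
  by rewrite -(rc_const y).
have HK : K = 0.
  have : \sum_y (kk y * (rr - 1) + K) = 0 by rewrite big1.
  rewrite big_split /= -mulr_suml sumr_const card_point -/K -[K *+ _]mulr_natr.
  move=> /eqP; rewrite -mulrDr mulf_eq0 => /orP [/eqP //|].
  rewrite gt_eqF //; apply: addr_gt0; first exact: rr1_gt0.
  rewrite ltr0n expn_gt0; apply/orP; left; apply: ltnW; exact: card_F_gt1.
have := key (g i); rewrite HK addr0 /kk gh => /eqP; rewrite mulf_eq0 => /orP [/eqP //|].
by rewrite gt_eqF // rr1_gt0.
Qed.


Lemma a0_ok : (q ^+ n.+1 - q ^+ 2) / (q - 1) + q != 0.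
Proof.
have -> : (q ^+ n.+1 - q ^+ 2) / (q - 1) = q * q * (Q - 1) / (q - 1).
  rewrite exprS qn expr2; field; exact: q10.
have h1 := q_gt1 F R; have h2 := Qgeq.
have : 0 <= q * q * (Q - 1) / (q - 1).
  apply: divr_ge0; last by lra.
  apply: mulr_ge0; last by lra. apply: mulr_ge0; lra.
move=> h; rewrite gt_eqF //; lra.
Qed.

Lemma a1_ok : (q ^+ n - q ^+ 2) / (q - 1) + q != 0.
Proof.
have -> : (q ^+ n - q ^+ 2) / (q - 1) = q * (Q - q) / (q - 1).
  rewrite qn expr2; field; exact: q10.
have h1 := q_gt1 F R; have h2 := Qgeq.
have : 0 <= q * (Q - q) / (q - 1).
  apply: divr_ge0; last by lra.
  apply: mulr_ge0; lra.
move=> h; rewrite gt_eqF //; lra.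
Qed.

Lemma inV_scale i (a : R) (u : vec) : inV i u -> inV i (a *: u).
Proof. by move=> h; have := inV_lin a h (inV_0 i); rewrite addr0. Qed.

Lemma main_thm : free (pencils F n R) /\
  (forall v : vec,
     v \in <<pencils F n R>>%VS <->
     exists v0 v1 : vec,
       [/\ inV ord0 v0, inV (inord 1) v1 & v = v0 + v1]).
Proof.
split; first exact: pencils_free.
move=> v; split.
- move=> hv; rewrite (coord_span (X := in_tuple (pencils F n R)) hv).
  apply: (big_ind (fun w => exists v0 v1 : vec, [/\ inV ord0 v0, inV (inord 1) v1 & w = v0 + v1])).
  + by exists 0, 0; split; [exact: inV_0 | exact: inV_0 | rewrite addr0].
  + move=> x y [x0 [x1 [h0 h1 ->]]] [y0 [y1 [k0 k1 ->]]].
    exists (x0 + y0), (x1 + y1); split; last by rewrite addrACA.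
      by have := inV_lin 1 h0 k0; rewrite scale1r.
    by have := inV_lin 1 h1 k1; rewrite scale1r.
  + move=> j _.
    have : (in_tuple (pencils F n R))`_j \in pencils F n R by apply: mem_nth; exact: ltn_ord.
    case/imageP => p _ ->.
    set c := coord _ j v.
    exists (c *: (Q^-1 *: onev)), (c *: (pencil R p - Q^-1 *: onev)); split.
    * by apply: inV_scale; apply: inV_scale; exact: one_V0.
    * by apply: inV_scale; exact: v1_V1.
    * by rewrite -scalerDr addrC subrK.
- case=> v0 [v1 [h0 h1 ->]]; apply: memvD.
  + rewrite /inV /eigvals /= in h0; case: h0 => hb _ _.
    exact: (eig_span hb a0_ok).
  + rewrite /inV eig1 in h1; case: h1 => hb _ _.
    exact: (eig_span hb a1_ok).
Qed.

End Main.

Unset Implicit Arguments.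

Theorem theorem5p13 (F : finFieldType) (n : nat) (R : realFieldType) :
  (3 <= n)%N ->
  free (pencils F n R) /\
  (forall v : vec F n R,
     v \in <<pencils F n R>>%VS <->
     exists v0 v1 : vec F n R,
       [/\ inV ord0 v0, inV (inord 1) v1 & v = v0 + v1]).
Proof.
move=> hn; exact: (@main_thm F n R hn).
Qed.
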